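(* For every integer $s \ge 2$, $R(s,s) \le s$ and $R(s,s) \ge p$, where $p$ is the smallest prime factor of $s$. Moreover, if $s$ is even then $R(s,s)=2$.
   Context: Let $Z_s$ be the ring of integers modulo $s$. A family $\mathcal{F} \subseteq Z_s^q$ is covering if for every ordered pair of distinct vectors $u,v \in \mathcal{F}$ and every $a \in Z_s$ there is a coordinate $i$ with $u_i - v_i = a$. $R(s,q)$ denotes the maximum possible cardinality of a covering family in $Z_s^q$. *)

(* Defs.v *)
From HB Require Import structures.
From mathcomp Require Import all_boot all_order all_algebra.
Set Implicit Arguments. Unset Strict Implicit. Unset Printing Implicit Defensive.
Import GRing.Theory.
Local Open Scope ring_scope.

(* Vectors of Z_s^q are finite functions 'I_q -> 'Z_s.  'Z_s is the ring of
   integers modulo s for s >= 2 (the only case used). *)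
Definition covering (s q : nat) (F : {set {ffun 'I_q -> 'Z_s}}) : bool :=
  [forall u in F, forall v in F, (u != v) ==>
     [forall a : 'Z_s, [exists i : 'I_q, u i - v i == a]]].

Definition R (s q : nat) : nat :=
  (\max_(F : {set {ffun 'I_q -> 'Z_s}} | covering F) #|F|)%N.

(* Main.v *)
Require Import Defs.
From mathcomp Require Import all_boot all_order all_algebra.
From mathcomp Require Import zify ring.
Import GRing.Theory.

Lemma surj_inj (T : finType) (f : T -> T) :
  (forall y, exists x, f x = y) -> injective f.
Proof.
move=> sf.
have H : {in T &, injective f}.
  apply/image_injP; rewrite eqn_leq; apply/andP; split.
    by rewrite (leq_trans (card_size _)) // size_map -cardE.
  apply/subset_leq_card/subsetP => y _.
  by have [x <-] := sf y; apply: image_f.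
by move=> x y; apply: H.
Qed.

Lemma covP n (F : {set {ffun 'I_n.+2 -> 'Z_n.+2}}) u v :
  covering F -> u \in F -> v \in F -> u != v ->
  injective (fun i : 'I_n.+2 => ((u i - v i)%R : 'I_n.+2)).
Proof.
move=> /forallP cF uF vF uv; apply: surj_inj => a.
have := cF u; rewrite uF /= => /forall_inP/(_ v vF).
rewrite uv /= => /forallP/(_ a)/existsP [i /eqP Hi].
by exists i.
Qed.

Lemma cop_small d s : 0 < d < pdiv s -> coprime d s.
Proof.
move=> /andP [d0 dp]; rewrite /coprime; apply/negPn/negP => H.
have g0 : 0 < gcdn d s by rewrite gcdn_gt0 d0.
have g1 : 1 < gcdn d s by move: H g0; case: (gcdn d s) => [|[|k]].
have := pdiv_min_dvd g1 (dvdn_gcdr d s).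
have := dvdn_leq d0 (dvdn_gcdl d s).
lia.
Qed.

Lemma upper n (F : {set {ffun 'I_n.+2 -> 'Z_n.+2}}) :
  covering F -> #|F| <= n.+2.
Proof.
move=> cF.
pose one : 'I_n.+2 := Ordinal (isT : 1 < n.+2).
pose h (u : {ffun 'I_n.+2 -> 'Z_n.+2}) : 'I_n.+2 := (u one - u ord0)%R.
have hinj : {in F &, injective h}.
  move=> u v uF vF huv; apply/eqP/negPn/negP => uv.
  have := @covP _ _ _ _ cF uF vF uv one ord0.
  have -> : (u one - v one = u ord0 - v ord0)%R.
    by move: huv; rewrite /h => /eqP; rewrite subr_eq => /eqP ->; ring.
  by move=> /(_ erefl) /(congr1 val).
rewrite -(card_in_imset hinj).
by rewrite (leq_trans (max_card _)) // card_ord.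
Qed.

Lemma lower n : exists F : {set {ffun 'I_n.+2 -> 'Z_n.+2}},
  covering F /\ #|F| = pdiv n.+2.
Proof.
set p := pdiv n.+2.
have pn : p <= n.+2 by apply: pdiv_leq.
pose u (k : nat) : {ffun 'I_n.+2 -> 'Z_n.+2} :=
  [ffun i : 'I_n.+2 => (k%:R * (i : 'Z_n.+2))%R].
exists [set u (val k) | k : 'I_p]; split.
  apply/forall_inP => _ /imsetP [k _ ->]; apply/forall_inP => _ /imsetP [l _ ->].
  apply/implyP => ukl; apply/forallP => a; apply/existsP.
  have kl : val k != val l by apply: contraNneq ukl => ->.
  have unit_d : ((k%:R - l%:R : 'Z_n.+2) \is a GRing.unit)%R.
    case: (ltngtP k l) => [lt|gt|/eqP eq]; last by rewrite eq in kl.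
      rewrite -opprB -natrB; last exact: ltnW.
      rewrite unitrN unitZpE // coprime_sym.
      apply: cop_small; rewrite subn_gt0 lt /=.
      exact: (leq_ltn_trans (leq_subr _ _) (ltn_ord l)).
    rewrite -natrB; last exact: ltnW.
    rewrite unitZpE // coprime_sym.
    apply: cop_small; rewrite subn_gt0 gt /=.
    exact: (leq_ltn_trans (leq_subr _ _) (ltn_ord k)).
  exists (((k%:R - l%:R : 'Z_n.+2)^-1 * a)%R : 'I_n.+2).
  by rewrite !ffunE -mulrBl mulrA divrr // mul1r.
rewrite card_imset ?card_ord // => k l ukl.
have := congr1 (fun f : {ffun 'I_n.+2 -> 'Z_n.+2} => f (1%R : 'Z_n.+2)) ukl.
rewrite !ffunE !mulr1 => /(congr1 (@nat_of_ord _)); rewrite !val_Zp_nat // !modn_small.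
  by move=> /val_inj.
all: by apply: leq_trans (ltn_ord _) pn.
Qed.

Lemma sumdiff n (F : {set {ffun 'I_n.+2 -> 'Z_n.+2}}) u v :
  covering F -> u \in F -> v \in F -> u != v ->
  (\sum_(i : 'I_n.+2) (u i - v i) = \sum_(i : 'I_n.+2) (i : 'Z_n.+2))%R.
Proof.
move=> cF uF vF uv.
by rewrite [RHS](reindex_inj (@covP _ _ _ _ cF uF vF uv)).
Qed.

Lemma sum_nz n : ~~ odd n.+2 -> (\sum_(i : 'I_n.+2) (i : 'Z_n.+2) != 0)%R.
Proof.
move=> ev.
have -> : (\sum_(i : 'I_n.+2) (i : 'Z_n.+2) =
    ((\sum_(i < n.+2) (i : nat))%N%:R : 'Z_n.+2))%R.
  by rewrite natr_sum; apply: eq_bigr => i _; rewrite natr_Zp.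
rewrite -(big_mkord xpredT (fun i => i)) bin2_sum.
apply/eqP => /(congr1 (@nat_of_ord _)); rewrite val_Zp_nat // => /eqP.
rewrite -/(dvdn _ _).
have [m hm] : exists m, n = m.*2.
  by exists n./2; move: ev; rewrite /= negbK => /even_halfK ->.
rewrite hm bin2.
have -> : (m.*2.+2 * (m.*2.+2).-1) = (m.+1 * m.*2.+1).*2.
  by rewrite -!mul2n; lia.
rewrite doubleK.
have -> : m.*2.+2 = m.+1 * 2 by rewrite -mul2n; lia.
rewrite dvdn_pmul2l // dvdn2 /= odd_double //.
Qed.

Lemma even_bound n (F : {set {ffun 'I_n.+2 -> 'Z_n.+2}}) :
  covering F -> ~~ odd n.+2 -> #|F| <= 2.
Proof.
move=> cF ev; rewrite leqNgt; apply/negP.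
move=> /card_gt2P [x [y [z [[xF yF zF] [xy yz zx]]]]].
have e1 := @sumdiff _ _ _ _ cF xF yF xy.
have e2 := @sumdiff _ _ _ _ cF yF zF yz.
have e3 := @sumdiff _ _ _ _ cF xF zF (introN eqP (fun h => negP zx (introT eqP (esym h)))).
set S := (\sum_(i : 'I_n.+2) (i : 'Z_n.+2))%R in e1 e2 e3.
have : (S + S = S + 0)%R.
  rewrite addr0 -[in RHS]e3 -{1}e1 -e2 -big_split; apply: eq_bigr => i _ /=.
  by rewrite addrA subrK.
by move/addrI/eqP; apply/negP; apply: sum_nz.
Qed.

Theorem proposition4p1 (s : nat) : (2 <= s)%N ->
  [/\ (R s s <= s)%N, (pdiv s <= R s s)%N & (~~ odd s -> R s s = 2%N)].
Proof.
case: s => [|[|n]] // _.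
have lo : pdiv n.+2 <= R n.+2 n.+2.
  have [F [cF <-]] := lower n.
  by rewrite /R; apply: leq_bigmax_cond.
split => //.
  by rewrite /R; apply/bigmax_leqP => F cF; apply: upper.
move=> ev; apply/eqP; rewrite eqn_leq; apply/andP; split.
  by rewrite /R; apply/bigmax_leqP => F cF; apply: even_bound.
apply: leq_trans lo.
have p2 : pdiv n.+2 <= 2 by apply: pdiv_min_dvd => //; rewrite dvdn2.
by apply: prime_gt1; apply: pdiv_prime.
Qed.
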